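(* Let ${}^*\mathbb{Z}=\mathbb{Z}^I/\mathcal{U}$ be an ultrapower of $\mathbb{Z}$ with respect to a nonprincipal ultrafilter $\mathcal{U}$ on a countably infinite set $I$, and let $\mathfrak{m}$ be a maximal ideal of ${}^*\mathbb{Z}$, with $\nu_{\mathfrak{m}}$ and $S_{\mathfrak{m}}$ as in the context. Then $P\mapsto\nu_{\mathfrak{m}}\big((P\,{}^*\mathbb{Z}_{\mathfrak{m}})\setminus\{0\}\big)$ is a one-to-one correspondence between the prime ideals $P$ of ${}^*\mathbb{Z}$ contained in $\mathfrak{m}$ and the proper radical subsemigroups of $S_{\mathfrak{m}}$ without right-end-point.
   Context: It is known (Olberding–Saydam) that the localization ${}^*\mathbb{Z}_{\mathfrak{m}}$ is a valuation domain; let $\nu_{\mathfrak{m}}$ be its valuation, with values in a totally ordered abelian group written multiplicatively, $\nu_{\mathfrak{m}}(a)\le\nu_{\mathfrak{m}}(b)$ iff $b/a\in{}^*\mathbb{Z}_{\mathfrak{m}}$, and $S_{\mathfrak{m}}=\nu_{\mathfrak{m}}({}^*\mathbb{Z}_{\mathfrak{m}}\setminus\{0\})$ as an ordered semigroup. A subsemigroup $T\subseteq S_{\mathfrak{m}}$ (a subset closed under multiplication) is proper if $T\neq S_{\mathfrak{m}}$; convex if $t_1<s<t_2$ with $t_1,t_2\in T$ implies $s\in T$; radical if whenever $x\in T$, $n>0$, $y\in S_{\mathfrak{m}}$, $y^n=x$, then $y\in T$; and without right-end-point if it is convex and $x\in T$, $y\in S_{\mathfrak{m}}$, $x<y$ imply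 $y\in T$. *)

(* Defs.v *)
From HB Require Import structures.
From mathcomp Require Import all_boot all_order all_algebra.
From mathcomp Require Import boolp classical_sets functions.
From mathcomp Require Import ring_quotient fraction.

Set Implicit Arguments.
Unset Strict Implicit.
Unset Printing Implicit Defensive.

Import Order.TTheory GRing.Theory Num.Theory.
Local Open Scope ring_scope.
Local Open Scope classical_set_scope.

Record npultrafilter (I : Type) := NPUltrafilter {
  uf :> set (set I);
  uf_setT : uf setT;
  uf_set0 : ~ uf set0;
  uf_super : forall A B : set I, uf A -> A `<=` B -> uf B;
  uf_setI : forall A B : set I, uf A -> uf B -> uf (A `&` B);
  uf_ultra : forall A : set I, uf A \/ uf (~` A);
  uf_nonprincipal : forall i : I, ~ uf [set i]
}.

Section Ultrapower.
Variables (I : pointedType) (U : npultrafilter I).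

Definition uf_null : {pred (I -> int)} := fun x => `[< uf U [set i | x i = 0] >].

Lemma uf_null_idealr_closed : idealr_closed uf_null.
Proof.
split.
- by apply/asboolP; apply: uf_super (@uf_setT _ U) _ => i _.
- apply/negP; rewrite /in_mem /= /uf_null => /asboolP H.
  have := @uf_set0 _ U; apply.
  by apply: uf_super H _ => i /=.
- move=> a u v /asboolP Hu /asboolP Hv; apply/asboolP.
  apply: uf_super (uf_setI Hu Hv) _ => i /= [ui vi].
  by rewrite /GRing.add /GRing.mul /= ui vi mulr0 addr0.
Qed.

HB.instance Definition _ := isIdealr.Build (I -> int) uf_null
  uf_null_idealr_closed.

Lemma uf_null_prime : prime_idealr_closed uf_null.
Proof.
move=> u v /asboolP H; apply/orP.
case: (@uf_ultra _ U [set i | u i = 0]) => Hu; [by left; apply/asboolP|].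
right; apply/asboolP; apply: uf_super (uf_setI H Hu) _ => i /= [].
rewrite /GRing.mul /= => /eqP; rewrite mulf_eq0 => /orP[/eqP //|/eqP ? ].
by [].
Qed.

HB.instance Definition _ := isPrimeIdealrClosed.Build (I -> int) uf_null
  uf_null_prime.

Definition zstar := @Quotient.quot (I -> int) uf_null.

HB.instance Definition _ := GRing.ComNzRing.on zstar.

Definition zs_unit : {pred zstar} := fun x => `[< exists y : zstar, y * x = 1 >].
Definition zs_inv (x : zstar) : zstar :=
  match pselect (exists y : zstar, y * x = 1) with
  | left h => projT1 (cid h)
  | right _ => x
  end.

Lemma zs_mulVx : {in zs_unit, left_inverse 1 zs_inv *%R}.
Proof.
move=> x /asboolP h; rewrite /zs_inv; case: pselect => // h'.
by case: cid.
Qed.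

Lemma zs_unitPl : forall x y : zstar, y * x = 1 -> zs_unit x.
Proof. by move=> x y h; apply/asboolP; exists y. Qed.

Lemma zs_invr_out : {in [predC zs_unit], zs_inv =1 id}.
Proof.
move=> x; rewrite inE /= => /asboolPn h; rewrite /zs_inv.
by case: pselect.
Qed.

HB.instance Definition _ := GRing.ComNzRing_hasMulInverse.Build zstar
  zs_mulVx zs_unitPl zs_invr_out.

HB.instance Definition _ := GRing.ComUnitRing_isIntegral.Build zstar
  (@Quotient.rquot_IdomainAxiom _ uf_null).

End Ultrapower.

Section Ideals.
Variable R : comNzRingType.

Definition is_ideal (J : set R) : Prop :=
  [/\ J 0, (forall x y, J x -> J y -> J (x + y))
    & (forall r x, J x -> J (r * x))].

Definition is_prime_ideal (P : set R) : Prop :=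
  [/\ is_ideal P, ~ P 1 & forall a b, P (a * b) -> P a \/ P b].

Definition is_maximal_ideal (M : set R) : Prop :=
  [/\ is_ideal M, ~ M 1 &
      forall J : set R, is_ideal J -> M `<=` J -> J = M \/ J = setT].

End Ideals.

(* Localization at a maximal ideal m of a domain R, inside the fraction      *)
(* field K = {fraction R}, and the associated valuation nu_m with values in  *)
(* the value group K^x / (R_m)^x (elements = cosets  x (R_m)^x  in K).       *)

Section Valuation.
Variables (R : idomainType) (m : set R).

Local Notation K := {fraction R}.
Local Notation "x %:F" := (@FracField.tofrac R x).

Definition loc : set K :=
  [set x | exists a s : R, ~ m s /\ x = a%:F / s%:F].

Definition loc_units : set K :=
  [set u | loc u /\ exists v, loc v /\ u * v = 1].

Definition nu (x : K) : set K := [set y | exists2 u, loc_units u & y = u * x].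

Definition vmul (A B : set K) : set K :=
  [set c | exists a b, [/\ A a, B b & c = a * b]].

Definition vle (A B : set K) : Prop :=
  exists a b, [/\ A a, B b & loc (b / a)].

Definition vlt (A B : set K) : Prop := vle A B /\ A <> B.

Definition vpow (A : set K) (n : nat) : set K := iter n (vmul A) (nu 1).

Definition Sm : set (set K) := nu @` (loc `\ 0).

(* The ideal P R_m of R_m generated by (the image of) a subset P of R. *)
Definition ext_ideal (P : set R) : set K :=
  [set x | forall J : set K,
     J 0 -> (forall y z, J y -> J z -> J (y + z)) ->
     (forall r y, loc r -> J y -> J (r * y)) ->
     (forall p, P p -> J p%:F) -> J x].

Definition Phi (P : set R) : set (set K) := nu @` (ext_ideal P `\ 0).

Definition subsemigroup (T : set (set K)) : Prop :=
  T `<=` Sm /\ (forall x y, T x -> T y -> T (vmul x y)).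

Definition proper_sub (T : set (set K)) : Prop := T <> Sm.

Definition convex (T : set (set K)) : Prop :=
  forall t1 t2 s, T t1 -> T t2 -> Sm s -> vlt t1 s -> vlt s t2 -> T s.

Definition radical (T : set (set K)) : Prop :=
  forall x n y, T x -> (0 < n)%N -> Sm y -> vpow y n = x -> T y.

Definition without_right_end_point (T : set (set K)) : Prop :=
  convex T /\ (forall x y, T x -> Sm y -> vlt x y -> T y).

Definition good_subsemigroup (T : set (set K)) : Prop :=
  [/\ subsemigroup T, proper_sub T, radical T & without_right_end_point T].

End Valuation.

(* Main.v *)
Require Import Defs.
From HB Require Import structures.
From mathcomp Require Import all_boot all_order all_algebra.
From mathcomp Require Import boolp classical_sets functions.
From mathcomp Require Import ring_quotient fraction.
From mathcomp Require Import ring.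
Import Order.TTheory GRing.Theory Num.Theory.
Set Implicit Arguments.
Unset Strict Implicit.
Unset Printing Implicit Defensive.
Local Open Scope ring_scope.
Local Open Scope classical_set_scope.

Lemma int_bez (a b : int) : exists (d a' b' u v : int),
  [/\ a = d * a', b = d * b' & u * a' + v * b' = 1].
Proof.
have [/andP[/eqP-> /eqP->]|nz] := boolP ((a == 0) && (b == 0)).
  by exists 0, 1, 0, 1, 0; split; rewrite ?mul0r ?mulr0 ?addr0 ?mulr1.
have g0 : gcdz a b != 0 by rewrite gcdz_eq0.
case: (Bezoutz a b) => u [v Huv].
exists (gcdz a b), (a %/ gcdz a b)%Z, (b %/ gcdz a b)%Z, u, v.
have ea : a = gcdz a b * (a %/ gcdz a b)%Z by rewrite mulrC divzK // dvdz_gcdl.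
have eb : b = gcdz a b * (b %/ gcdz a b)%Z by rewrite mulrC divzK // dvdz_gcdr.
split => //.
apply: (mulfI g0); rewrite mulr1 mulrDr mulrCA [X in _ + X]mulrCA -ea -eb; exact: Huv.
Qed.

Section ZS.
Local Open Scope quotient_scope.
Lemma zs_bez (I : pointedType) (U : npultrafilter I) (x y : zstar U) :
  exists (d a b u v : zstar U), [/\ x = d * a, y = d * b & u * a + v * b = 1].
Proof.
have /choice[F HF] : forall i : I, exists t : int * int * int * int * int,
   [/\ repr x i = t.1.1.1.1 * t.1.1.1.2, repr y i = t.1.1.1.1 * t.1.1.2
     & t.1.2 * t.1.1.1.2 + t.2 * t.1.1.2 = 1].
  move=> i; have [d [a [b [u [v [h1 h2 h3]]]]]] := int_bez (repr x i) (repr y i).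
  by exists (d, a, b, u, v).
exists (\pi_(zstar U) (fun i => (F i).1.1.1.1)), (\pi_(zstar U) (fun i => (F i).1.1.1.2)),
  (\pi_(zstar U) (fun i => (F i).1.1.2)), (\pi_(zstar U) (fun i => (F i).1.2)), (\pi_(zstar U) (fun i => (F i).2)).
have piM (f g : I -> int) : \pi_(zstar U) (f * g) = \pi_(zstar U) f * \pi_(zstar U) g by rewrite rmorphM.
have piD (f g : I -> int) : \pi_(zstar U) (f + g) = \pi_(zstar U) f + \pi_(zstar U) g by rewrite rmorphD.
rewrite -!piM -piD -(rmorph1 (\pi_(zstar U))).
split.
- rewrite -[x]reprK; congr (\pi _); apply/funext => i; by case: (HF i).
- rewrite -[y]reprK; congr (\pi _); apply/funext => i; by case: (HF i).
- congr (\pi _); apply/funext => i; by case: (HF i).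
Qed.
End ZS.

Section Fid.
Variable F0 : fieldType.
Implicit Types a b s t u w x y d : F0.
Lemma fidD a s b t : s != 0 -> t != 0 -> a / s + b / t = (a * t + b * s) / (s * t).
Proof. by move=> h h'; field; rewrite h h'. Qed.
Lemma fidV a s : a != 0 -> s != 0 -> (a / s) * (s / a) = 1.
Proof. by move=> h h'; field; rewrite h h'. Qed.
Lemma fidU x y u w : x != 0 -> u != 0 -> w != 0 -> y / x = (w * y / (u * x)) * u * w^-1.
Proof. by move=> h h' h''; field; rewrite h h' h''. Qed.
Lemma fidC d a b : d != 0 -> a != 0 -> (d * b) / (d * a) = b / a.
Proof. by move=> h h'; field; rewrite h h'. Qed.
Lemma fidQ a s b t : s != 0 -> t != 0 -> a != 0 -> (b / t) / (a / s) = (b * s) / (a * t).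
Proof. by move=> h h' h''; field; rewrite h h' h''. Qed.
Lemma fidS a b : a != 0 -> (b / a) * (a * b) = b ^+ 2.
Proof. by move=> h; field; rewrite h. Qed.
Lemma fidS' a b : b != 0 -> (a / b) * (a * b) = a ^+ 2.
Proof. by move=> h; field; rewrite h. Qed.
Lemma fidR u w x y : u * w * (x * y) = u * x * (w * y).
Proof. by ring. Qed.
End Fid.

Section Abs.
Variables (R : idomainType) (m : set R).
Hypothesis Hm : is_maximal_ideal m.
Hypothesis Hbez : forall a b : R, exists (d a' b' u v : R),
  [/\ a = d * a', b = d * b' & u * a' + v * b' = 1].

Local Notation K := {fraction R}.
Local Notation "x %:F" := (@FracField.tofrac R x).

Lemma m0 : m 0. Proof. by case: Hm => [[h0 hD hM] _ _]. Qed.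
Lemma m1 : ~ m 1. Proof. by case: Hm => [_ h _]. Qed.
Lemma mD x y : m x -> m y -> m (x + y). Proof. by case: Hm => [[h0 hD hM] _ _]; apply: hD. Qed.
Lemma mM r x : m x -> m (r * x). Proof. by case: Hm => [[h0 hD hM] _ _]; apply: hM. Qed.

Lemma mprime a b : m (a * b) -> m a \/ m b.
Proof.
move=> hab; case: (pselect (m a)) => ha; [by left|right].
case: Hm => _ _ hmax.
pose J := [set x | exists y r, m y /\ x = y + r * a].
have JI : is_ideal J.
  split.
  - by exists 0, 0; rewrite mul0r addr0; split => //; exact: m0.
  - move=> x z [y1 [r1 [h1 ->]]] [y2 [r2 [h2 ->]]].
    exists (y1 + y2), (r1 + r2); split; first exact: mD.
    by rewrite mulrDl; ring.
  - move=> r x [y [s [h ->]]]; exists (r * y), (r * s); split; first exact: mM.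
    by ring.
have mJ : m `<=` J by move=> x hx; exists x, 0; rewrite mul0r addr0; split.
case: (hmax J JI mJ) => EJ.
  by exfalso; apply: ha; rewrite -EJ; exists 0, 1; split; [exact: m0|rewrite add0r mul1r].
have : J 1 by rewrite EJ.
case=> y [r [hy e]].
have -> : b = b * y + r * (a * b) by rewrite -[b in LHS]mulr1 e; ring.
by apply: mD; apply: mM.
Qed.

Lemma nm_neq0 s : ~ m s -> s != 0.
Proof. by move=> h; apply/eqP => e; apply: h; rewrite e; exact: m0. Qed.

Lemma nmF_neq0 s : ~ m s -> s%:F != 0.
Proof. by move=> h; rewrite tofrac_eq0; exact: nm_neq0. Qed.

Lemma nm_mul s t : ~ m s -> ~ m t -> ~ m (s * t).
Proof. by move=> hs ht /mprime []. Qed.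

Local Notation loc := (loc m).
Local Notation nu := (nu m).

Lemma locF r : loc r%:F.
Proof. by exists r, 1; split; [exact: m1| rewrite tofrac1 divr1]. Qed.

Lemma loc0 : loc 0. Proof. by rewrite -tofrac0; exact: locF. Qed.
Lemma loc1 : loc 1. Proof. by rewrite -tofrac1; exact: locF. Qed.

Lemma locD x y : loc x -> loc y -> loc (x + y).
Proof.
move=> [a [s [hs ->]]] [b [t [ht ->]]].
exists (a * t + b * s), (s * t); split; first exact: nm_mul.
have := nmF_neq0 hs; have := nmF_neq0 ht.
rewrite !tofracD !tofracM => h1 h2; exact: fidD.
Qed.

Lemma locM x y : loc x -> loc y -> loc (x * y).
Proof.
move=> [a [s [hs ->]]] [b [t [ht ->]]].
exists (a * b), (s * t); split; first exact: nm_mul.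
by rewrite !tofracM mulf_div.
Qed.

Lemma locFV a s : ~ m s -> loc (a%:F / s%:F).
Proof. by move=> h; exists a, s. Qed.

Lemma lu1 : loc_units m 1.
Proof. by split; [exact: loc1|exists 1; rewrite mulr1; split => //; exact: loc1]. Qed.

Lemma luM u w : loc_units m u -> loc_units m w -> loc_units m (u * w).
Proof.
move=> [hu [u' [hu' eu]]] [hw [w' [hw' ew]]]; split; first exact: locM.
exists (u' * w'); split; first exact: locM.
by rewrite mulrACA eu ew mulr1.
Qed.

Lemma lu_neq0 u : loc_units m u -> u != 0.
Proof. by move=> [_ [v [_ e]]]; apply/eqP => e0; move: e; rewrite e0 mul0r => /eqP; rewrite eq_sym oner_eq0. Qed.

Lemma luV u : loc_units m u -> loc (u^-1).
Proof.
move=> hu; have u0 := lu_neq0 hu; case: hu => _ [v [hv e]].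
suff -> : u^-1 = v by [].
by rewrite -[u^-1]mulr1 -e mulKf.
Qed.

Lemma luF a s : ~ m a -> ~ m s -> loc_units m (a%:F / s%:F).
Proof.
move=> ha hs; split; first exact: locFV.
exists (s%:F / a%:F); split; first exact: locFV.
exact: fidV (nmF_neq0 ha) (nmF_neq0 hs).
Qed.

Lemma nu_self x : nu x x.
Proof. by exists 1; [exact: lu1|rewrite mul1r]. Qed.

Lemma nu_eq x y : nu x = nu y -> exists2 u, loc_units m u & x = u * y.
Proof. by move=> e; have := nu_self x; rewrite e. Qed.

Lemma nuM x y : vmul (nu x) (nu y) = nu (x * y).
Proof.
apply/seteqP; split => c.
  by move=> [a [b [[u hu ->] [w hw ->] ->]]]; exists (u * w); [exact: luM| rewrite fidR].
move=> [u hu ->]; exists (u * x), y; split => //; last by rewrite mulrA.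
  by exists u.
exact: nu_self.
Qed.

Lemma vpowE x n : vpow m (nu x) n = nu (x ^+ n).
Proof.
elim: n => [|n IH]; first by rewrite expr0.
by rewrite /vpow iterS -/(vpow m (nu x) n) IH nuM exprS.
Qed.

Lemma vle_loc x y : vle m (nu x) (nu y) -> x != 0 -> loc (y / x).
Proof.
move=> [a [b [[u hu ->] [w hw ->] hl]]] x0.
have u0 := lu_neq0 hu; have w0 := lu_neq0 hw.
rewrite (fidU y x0 u0 w0).
apply: locM; last exact: luV.
by apply: locM => //; case: hu.
Qed.

Lemma loc_vle x y : loc (y / x) -> vle m (nu x) (nu y).
Proof. by move=> h; exists x, y; split => //; exact: nu_self. Qed.

Lemma Sm_nu x : loc x -> x != 0 -> Sm m (nu x).
Proof. by move=> h1 h2; exists x => //; split => //; apply/eqP. Qed.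

Lemma nu_Sm x : Sm m (nu x) -> loc x /\ x != 0.
Proof.
move=> [y [hy y0] /esym /nu_eq [u hu ->]].
split; first by apply: locM => //; case: hu.
by rewrite mulf_neq0 //; [exact: lu_neq0|apply/eqP].
Qed.

Lemma valF a b : loc (b%:F / a%:F) \/ loc (a%:F / b%:F).
Proof.
have [d [a' [b' [u [v [ea eb e]]]]]] := Hbez a b.
have [d0|d0] := eqVneq d 0.
  by left; rewrite ea d0 mul0r tofrac0 invr0 mulr0; exact: loc0.
case: (pselect (m a')) => ha.
  case: (pselect (m b')) => hb.
    by exfalso; apply: m1; rewrite -e; apply: mD; apply: mM.
  right; rewrite ea eb !tofracM.
  have := nmF_neq0 hb; have : d%:F != 0 by rewrite tofrac_eq0.
  by move=> h1 h2; rewrite fidC //; exact: locFV.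
left; rewrite ea eb !tofracM.
have := nmF_neq0 ha; have : d%:F != 0 by rewrite tofrac_eq0.
by move=> h1 h2; rewrite fidC //; exact: locFV.
Qed.

Lemma val x y : loc x -> loc y -> loc (y / x) \/ loc (x / y).
Proof.
move=> [a [s [hs ->]]] [b [t [ht ->]]].
have s0 := nmF_neq0 hs; have t0 := nmF_neq0 ht.
have [a0|a0] := eqVneq a 0.
  by left; rewrite a0 tofrac0 mul0r invr0 mulr0; exact: loc0.
have [b0|b0] := eqVneq b 0.
  by right; rewrite b0 tofrac0 mul0r invr0 mulr0; exact: loc0.
have aF : a%:F != 0 by rewrite tofrac_eq0.
have bF : b%:F != 0 by rewrite tofrac_eq0.
case: (valF (a * t) (b * s)); rewrite !tofracM => h; [left|right].
  by rewrite fidQ.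
by rewrite fidQ.
Qed.


Local Notation ext P := (ext_ideal m P).

Lemma ext0 P : ext P 0. Proof. by move=> J h0. Qed.
Lemma extD P x y : ext P x -> ext P y -> ext P (x + y).
Proof. move=> hx hy J h0 hD hM hF; apply: (hD); [exact: (hx J h0 hD hM hF)|exact: (hy J h0 hD hM hF)]. Qed.
Lemma extM P r x : loc r -> ext P x -> ext P (r * x).
Proof. move=> hr hx J h0 hD hM hF; apply: (hM) => //; exact: (hx J h0 hD hM hF). Qed.
Lemma extF P p : P p -> ext P p%:F.
Proof. move=> hp J h0 hD hM hF; exact: hF. Qed.

Section Prime.
Variable P : set R.
Hypotheses (hP : is_prime_ideal P) (hPm : P `<=` m).

Lemma ext_rep x : ext P x -> exists a s, [/\ P a, ~ m s & x = a%:F / s%:F].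
Proof.
case: hP => [[P0 PD PM] P1 Pp] hx.
apply: (hx (fun x => exists a s, [/\ P a, ~ m s & x = a%:F / s%:F])).
- by exists 0, 1; split => //; [exact: m1| rewrite tofrac0 mul0r].
- move=> y z [a [s [ha hs ->]]] [b [t [hb ht ->]]].
  exists (a * t + b * s), (s * t); split.
  + by apply: PD; rewrite mulrC; apply: PM.
  + exact: nm_mul.
  + rewrite !tofracD !tofracM; exact: fidD (nmF_neq0 hs) (nmF_neq0 ht).
- move=> r y [c [u [hu ->]]] [a [s [ha hs ->]]].
  exists (c * a), (u * s); split; [exact: PM|exact: nm_mul|by rewrite !tofracM mulf_div].
- by move=> p hp; exists p, 1; split => //; [exact: m1|rewrite tofrac1 divr1].
Qed.

Lemma ext_loc x : ext P x -> loc x.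
Proof. by move=> /ext_rep [a [s [_ hs ->]]]; exact: locFV. Qed.

Lemma ext_contr r : ext P r%:F -> P r.
Proof.
move=> /ext_rep [a [s [ha hs e]]].
have : (r * s)%:F = a%:F by rewrite tofracM e divfK // nmF_neq0.
move=> /eqP; rewrite tofrac_eq => /eqP e2.
case: hP => _ _ Pp; case: (Pp r s); rewrite ?e2 // => /hPm /hs [].
Qed.

Lemma prime_pow n p : P (p ^+ n.+1) -> P p.
Proof.
case: hP => _ _ Pp; elim: n => [|n IH]; first by rewrite expr1.
by rewrite exprS => /Pp [//|/IH].
Qed.

Lemma ext_cl x y : ext P x -> nu x = nu y -> ext P y.
Proof.
move=> hx /esym /nu_eq [u hu ->]; apply: extM => //; by case: hu.
Qed.

Lemma PhiE x : Phi m P (nu x) <-> ext P x /\ x != 0.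
Proof.
split.
  move=> [z [hz z0] e]; split; first exact: ext_cl e.
  move: e => /esym /nu_eq [u hu ->]; rewrite mulf_neq0 //; first exact: lu_neq0.
  exact/eqP.
by move=> [h1 h2]; exists x => //; split => //; apply/eqP.
Qed.

Lemma Phi_up x y : Phi m P x -> Sm m y -> vle m x y -> Phi m P y.
Proof.
move=> [z [hz /eqP z0] <-] [b [hb /eqP b0] <-] hv.
have hl := vle_loc hv z0.
apply/PhiE; split => //.
by rewrite -(divfK z0 b); apply: extM.
Qed.

Lemma Phi_good : good_subsemigroup m (Phi m P).
Proof.
split.
- split.
  + by move=> t [z [hz /eqP z0] <-]; apply: Sm_nu => //; exact: ext_loc.
  + move=> t1 t2 [x [hx /eqP x0] <-] [y [hy /eqP y0] <-]; rewrite nuM.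
    apply/PhiE; split; last by rewrite mulf_neq0.
    by apply: extM => //; exact: ext_loc.
- move=> E; have : Sm m (nu 1) by apply: Sm_nu; [exact: loc1|exact: oner_neq0].
  rewrite -E => /PhiE [h1 _].
  case: hP => _ P1 _; apply: P1; apply: ext_contr; by rewrite tofrac1.
- move=> x n y [z [hz z0] <-] n0 hy e.
  case: hy e => b [[c [s [hs ebc]]] /eqP b0] <-; rewrite vpowE => e.
  have hbn := ext_cl hz (esym e).
  case: n n0 e hbn => // n _ e hbn.
  have hc : P c.
    apply: (@prime_pow n); apply: ext_contr.
    have -> : (c ^+ n.+1)%:F = (s ^+ n.+1)%:F * b ^+ n.+1.
      by rewrite ebc expr_div_n -!tofracXn mulrC divfK // tofracXn expf_neq0 // nmF_neq0.
    by apply: extM => //; exact: locF.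
  apply/PhiE; split => //.
  rewrite ebc mulrC; apply: extM; last exact: extF.
  by rewrite -div1r -tofrac1; exact: locFV.
- split.
  + move=> t1 t2 s h1 h2 hs [hv _] _; exact: Phi_up hv.
  + by move=> x y hx hy [hv _]; exact: Phi_up hv.
Qed.

End Prime.

Lemma Phi_incl P1 P2 : is_prime_ideal P1 -> P1 `<=` m -> is_prime_ideal P2 -> P2 `<=` m ->
  Phi m P1 = Phi m P2 -> P1 `<=` P2.
Proof.
move=> h1 h1m h2 h2m e r hr.
have [->|r0] := eqVneq r 0; first by case: h2 => -[].
have : Phi m P1 (nu r%:F) by apply: (proj2 (PhiE P1 _)); split; [exact: extF|rewrite tofrac_eq0].
rewrite e => /(proj1 (PhiE P2 _)) [h _]; exact: ext_contr h.
Qed.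

Section Surj.
Variable T : set (set K).
Hypothesis hT : good_subsemigroup m T.

Lemma T_Sm t : T t -> Sm m t.
Proof. by case: hT => -[h _] _ _ _ /h. Qed.

Lemma T_up x w : T (nu x) -> loc w -> w != 0 -> T (nu (w * x)).
Proof.
move=> hx hw w0.
case: (pselect (nu (w * x) = nu x)) => [->//|ne].
have [lx x0] := nu_Sm (T_Sm hx).
case: hT => _ _ _ [_ hup]; apply: (hup (nu x)) => //.
  by apply: Sm_nu; [exact: locM|rewrite mulf_neq0].
split; last by move=> e; apply: ne.
by apply: loc_vle; rewrite mulfK.
Qed.

Lemma T_nu1 : ~ T (nu 1).
Proof.
move=> h1; case: hT => _ hpr _ _; apply: hpr.
apply/seteqP; split => t; first exact: T_Sm.
move=> [y [hy /eqP y0] <-]; rewrite -[y]mulr1; exact: T_up.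
Qed.

Definition Q (x : K) := x = 0 \/ T (nu x).

Lemma Q0 : Q 0. Proof. by left. Qed.

Lemma QD x y : Q x -> Q y -> Q (x + y).
Proof.
move=> [->|hx]; first by rewrite add0r.
move=> [->|hy]; first by rewrite addr0; right.
have [lx x0] := nu_Sm (T_Sm hx); have [ly y0] := nu_Sm (T_Sm hy).
have [s0|s0] := eqVneq (x + y) 0; first by left.
right; case: (val lx ly) => h.
  have e : x + y = (1 + y / x) * x by rewrite mulrDl mul1r divfK.
  rewrite e; apply: T_up => //; first by apply: locD => //; exact: loc1.
  by apply/eqP => w0; move: s0; rewrite e w0 mul0r eqxx.
have e : x + y = (1 + x / y) * y by rewrite mulrDl mul1r divfK // addrC.
rewrite e; apply: T_up => //; first by apply: locD => //; exact: loc1.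
by apply/eqP => w0; move: s0; rewrite e w0 mul0r eqxx.
Qed.

Lemma QM r y : loc r -> Q y -> Q (r * y).
Proof.
move=> hr [->|hy]; first by rewrite mulr0; left.
have [->|r0] := eqVneq r 0; first by rewrite mul0r; left.
by right; apply: T_up.
Qed.

Definition PT (r : R) := Q r%:F.

Lemma PT_prime : is_prime_ideal PT.
Proof.
split.
- split.
  + by rewrite /PT tofrac0; exact: Q0.
  + by move=> x y hx hy; rewrite /PT tofracD; exact: QD.
  + by move=> r x hx; rewrite /PT tofracM; apply: QM => //; exact: locF.
- rewrite /PT tofrac1 => -[/eqP|]; [by rewrite oner_eq0|exact: T_nu1].
- move=> a b; rewrite /PT tofracM.
  have [->|a0] := eqVneq (a%:F) 0; first by left; left.
  have [->|b0] := eqVneq (b%:F) 0; first by right; left.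
  move=> [/eqP|hab]; first by rewrite mulf_eq0 (negPf a0) (negPf b0).
  case: hT => _ _ hrad _.
  case: (val (locF a) (locF b)) => h.
    right; right; apply: (hrad (nu (b%:F ^+ 2)) 2%N) => //.
      by rewrite -(fidS _ a0); apply: T_up => //; rewrite mulf_neq0 // invr_neq0.
      by apply: Sm_nu => //; exact: locF.
    by rewrite vpowE.
  left; right; apply: (hrad (nu (a%:F ^+ 2)) 2%N) => //.
    by rewrite -(fidS' _ b0); apply: T_up => //; rewrite mulf_neq0 // invr_neq0.
    by apply: Sm_nu => //; exact: locF.
  by rewrite vpowE.
Qed.

Lemma PT_m : PT `<=` m.
Proof.
move=> r hr; case: (pselect (m r)) => // nr; exfalso.
case: hr => [/eqP|hr]; first by rewrite tofrac_eq0; apply/negP; exact: nm_neq0.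
apply: T_nu1.
have r0 := nmF_neq0 nr.
have := T_up hr (locFV 1 nr).
rewrite tofrac1 div1r mulVf //; apply.
by rewrite invr_neq0.
Qed.

Lemma Phi_PT : Phi m PT = T.
Proof.
apply/seteqP; split => t.
  move=> [z [hz /eqP z0] <-].
  have : Q z.
    apply: (hz Q); [exact: Q0|exact: QD|exact: QM|by move=> p].
  by case=> // /eqP; rewrite (negPf z0).
move=> ht; have := T_Sm ht; move=> [y [[a [s [hs ey]]] /eqP y0] et].
have s0 := nmF_neq0 hs.
have ha : PT a.
  right; have -> : a%:F = s%:F * y by rewrite ey mulrC divfK.
  have hy : T (nu y) by rewrite et.
  by apply: T_up => //; exact: locF.
rewrite -et; apply/(proj2 (PhiE PT _)); split => //.
rewrite ey mulrC; apply: extM; last exact: extF.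
by rewrite -div1r -tofrac1; exact: locFV.
Qed.

End Surj.

End Abs.

Theorem theorem4p14 (I : pointedType) (e : nat -> I) (e_bij : bijective e)
    (U : npultrafilter I) (m : set (zstar U)) :
  is_maximal_ideal m ->
  set_bij [set P : set (zstar U) | is_prime_ideal P /\ P `<=` m]
          [set T | good_subsemigroup m T]
          (Phi m).
Proof.
move=> Hm.
have Hbez := @zs_bez I U.
split.
- by move=> P [hP hPm]; apply: Phi_good.
- move=> P1 P2 /set_mem [h1 h1m] /set_mem [h2 h2m] E.
  apply/seteqP; split; [exact: (Phi_incl Hm h1 h1m h2 h2m E)|exact: (Phi_incl Hm h2 h2m h1 h1m (esym E))].
- move=> T hT; exists (PT m T).
    by split; [exact: (PT_prime Hm Hbez hT)|exact: (PT_m Hm hT)].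
  exact: (Phi_PT Hm Hbez hT).
Qed.
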